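(* Let $s>1$, $n \geq 2$ and $k \geq 1$ be given ($s$ real, $n,k$ integers). Then $$H_k(n) \leq \frac{\left(\zeta(s)-1\right)^{k-1} n^s}{2^s}.$$ Moreover, if $n$ is odd, then $$H_k(n) \leq \frac{\left(\left(1-2^{-s}\right)\zeta(s)-1\right)^{k-1} n^s}{3^s}.$$
   Context: $H_k(n)$ is the number of ordered $k$-tuples $(d_1,\dots,d_k)$ of integers $d_i\ge 2$ with $d_1\cdots d_k=n$. $\zeta$ is the Riemann zeta function. *)

(* Defs.v *)
From HB Require Import structures.
From mathcomp Require Import all_boot all_order all_algebra.
From mathcomp Require Import all_classical all_reals all_analysis.
Set Implicit Arguments. Unset Strict Implicit. Unset Printing Implicit Defensive.
Import Order.TTheory GRing.Theory Num.Theory numFieldNormedType.Exports.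

(* H k n : number of ordered k-tuples (d_1,...,d_k) of integers d_i >= 2 with
   d_1 * ... * d_k = n.  For n >= 1 every such d_i divides n, hence d_i <= n,
   so it suffices to let the entries range over 'I_n.+1 = {0,...,n}. *)
Definition H (k n : nat) : nat :=
  #|[set t : {ffun 'I_k -> 'I_n.+1} |
      [forall i, 1 < (t i : nat)] && (\prod_(i < k) (t i : nat) == n)]|.

Local Open Scope ring_scope.

Definition zeta (R : realType) (s : R) : R :=
  limn (series (fun m : nat => (m.+1)%:R `^ (- s))).

(* Main.v *)
Require Import Defs.
From HB Require Import structures.
From mathcomp Require Import all_boot all_order all_algebra.
From mathcomp Require Import all_classical all_reals all_analysis.
From mathcomp Require Import ring lra.
Import Order.TTheory GRing.Theory Num.Theory numFieldNormedType.Exports.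
Local Open Scope ring_scope.

Section Anal.
Variable R : realType.

Lemma powR_pos (a p : R) : 0 < a -> a `^ p = expR (p * ln a).
Proof. by move=> a0; rewrite /powR gt_eqF. Qed.

Lemma key (r x : R) : 0 < r -> 1 <= x ->
  (x+1) `^ (-r) + r * (x+1) `^ (-(r+1)) <= x `^ (-r).
Proof.
move=> r0 x1.
have x0 : 0 < x by apply: lt_le_trans x1.
have y0 : 0 < x + 1 by apply: addr_gt0.
have lnx : ln x <= ln (x+1) - (x+1)^-1.
  have h1 : 0 < 1 - (x+1)^-1.
    rewrite subr_gt0 invf_lt1 //; apply: lt_le_trans (lerD x1 (lexx 1)) => /=.
    by rewrite ltrDr.
  have -> : ln x = ln (x+1) + ln (1 + (- (x+1)^-1)).
    rewrite -lnM ?posrE //; congr ln; field; by rewrite gt_eqF.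
  rewrite lerD2l; apply: le_ln1Dx; rewrite ltrN2 invf_lt1 //.
  by apply: le_lt_trans x1 _; rewrite ltrDl.
rewrite !powR_pos //.
have e1 : expR (- (r + 1) * ln (x + 1)) = expR (- r * ln (x + 1)) / (x+1).
  have -> : - (r + 1) * ln (x + 1) = - r * ln (x+1) + - ln (x+1) by ring.
  by rewrite expRD expRN lnK // posrE.
rewrite e1.
have : expR (- r * ln (x + 1)) * (1 + r * (x+1)^-1) <= expR (- r * ln x).
  have -> : - r * ln x = - r * ln (x+1) + r * (ln (x+1) - ln x) by ring.
  rewrite expRD ler_wpM2l ?expR_ge0 //.
  apply: le_trans (expR_ge1Dx _).
  rewrite lerD2l ler_wpM2l //; [exact: ltW|lra].
by rewrite mulrDr mulr1 mulrCA mulrA.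
Qed.

Definition F (s : R) (d : nat) : R := d%:R `^ (- s).

Lemma F0 s : 0 < s -> F s 0 = 0.
Proof. by move=> s0; rewrite /F powR0 // oppr_eq0 gt_eqF. Qed.
Lemma F1 s : F s 1 = 1.
Proof. by rewrite /F powR1. Qed.
Lemma F_ge0 s d : 0 <= F s d.
Proof. exact: powR_ge0. Qed.

Definition a (s : R) (m : nat) : R := F s m.+1.

Lemma seriesF s N : 0 < s -> series (a s) N = \sum_(0 <= d < N.+1) F s d.
Proof.
move=> s0; elim: N => [|N IH].
  by rewrite /series /= big_nil big_nat1 F0.
by rewrite seriesSr IH [RHS]big_nat_recr.
Qed.

Lemma series_bound s : 1 < s -> forall N,
  series (a s) N.+1 + F (s - 1) N.+1 * (s - 1)^-1 <= 1 + (s-1)^-1.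
Proof.
move=> s1; have r0 : 0 < s - 1 by rewrite subr_gt0.
elim => [|N IH].
  by rewrite seriesSr /series /= big_nil add0r /a !F1 mul1r.
rewrite seriesSr.
apply: le_trans IH; rewrite -addrA lerD2l.
have := @key (s - 1) N.+1%:R r0; rewrite ler1n => /(_ isT).
rewrite subrK natr1 /a /F -/(F (s-1) N.+2) => h.
rewrite -(ler_pM2r r0) mulrDl !divfK ?gt_eqF //.
lra.
Qed.

Lemma series_nd s : nondecreasing_seq (series (a s)).
Proof. apply/nondecreasing_seqP => n; rewrite seriesSr lerDl; exact: F_ge0. Qed.

Lemma series_cvg s : 1 < s -> cvgn (series (a s)).
Proof.
move=> s1; have r0 : 0 < s - 1 by rewrite subr_gt0.
apply: nondecreasing_is_cvgn (@series_nd s) _.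
exists (1 + (s-1)^-1) => _ [N _ <-].
case: N => [|N].
  rewrite /series /= big_nil; apply: addr_ge0 => //; rewrite invr_ge0 ltW //.
have h := @series_bound s s1 N.
have h2 : 0 <= F (s-1) N.+1 * (s-1)^-1 by rewrite mulr_ge0 ?F_ge0 // invr_ge0 ltW.
lra.
Qed.

Lemma series_le_zeta s N : 1 < s -> series (a s) N <= zeta s.
Proof. move=> s1; exact: (nondecreasing_cvgn_le (@series_nd s) (series_cvg s s1)). Qed.

Lemma sum2 s N : 0 < s ->
  \sum_(0 <= d < N.+2) (if (2 <= d)%N then F s d else 0) + 1 = \sum_(0 <= d < N.+2) F s d.
Proof.
move=> s0; elim: N => [|N IH].
  by rewrite !big_nat_recr //= !big_geq //= F0 // F1 !add0r.
by rewrite big_nat_recr //= [RHS]big_nat_recr //= -IH addrAC.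
Qed.

Lemma sum2odd s N : 0 < s ->
  \sum_(0 <= d < N.+2) (if (2 <= d)%N && odd d then F s d else 0) + 1
  = \sum_(0 <= d < N.+2 | odd d) F s d.
Proof.
move=> s0; elim: N => [|N IH].
  by rewrite [RHS]big_mkcond !big_nat_recr //= !big_nil F1 !add0r.
rewrite big_nat_recr //= [RHS]big_mkcond [RHS]big_nat_recr //= -[X in _ = X + _]big_mkcond -IH /=.
by rewrite addrAC.
Qed.

Lemma sumE s M : 0 < s ->
  series (a s) M.*2 = \sum_(0 <= d < (M.*2).+1 | odd d) F s d + 2%:R `^ (- s) * series (a s) M.
Proof.
move=> s0; elim: M => [|M IH].
  by rewrite /series /= double0 [X in _ = X + _]big_mkcond big_nat_recr //= !big_nil /= mulr0 !addr0.
have -> : \sum_(0 <= d < M.+1.*2.+1 | odd d) F s d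
    = \sum_(0 <= d < M.*2.+1 | odd d) F s d + F s M.*2.+1.
  by rewrite doubleS big_mkcond [in RHS]big_mkcond /= !big_nat_recr //= !odd_double /= addr0.
rewrite doubleS !seriesSr IH /a mulrDr.
have -> : F s (M.*2.+1).+1 = 2%:R `^ (- s) * F s M.+1.
  by rewrite /F -powRM ?ler0n // -natrM mul2n doubleS.
ring.
Qed.

Lemma sum_ext (P : pred nat) s N N' : (N <= N')%N ->
  \sum_(0 <= d < N | P d) F s d <= \sum_(0 <= d < N' | P d) F s d.
Proof.
move=> h; rewrite [X in _ <= X](big_cat_nat (leq0n N) h) /= lerDl.
apply: sumr_ge0 => i _; exact: F_ge0.
Qed.

Lemma odd_zeta s n : 1 < s ->
  \sum_(0 <= d < n.+1 | odd d) F s d <= (1 - 2%:R `^ (- s)) * zeta s.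
Proof.
move=> s1; have s0 : 0 < s by apply: lt_trans s1.
set c := 2%:R `^ (- s); set X := \sum_(_ <= _ < _ | _) _.
have c0 : 0 < c by rewrite powR_gt0.
have hM : forall M, (n <= M)%N -> series (a s) M <= (zeta s - X) / c.
  move=> M hM; rewrite ler_pdivlMr // mulrC.
  have : X <= series (a s) M.*2 - c * series (a s) M.
    rewrite sumE // addrK; apply: sum_ext; rewrite ltnS -addnn; exact: leq_trans hM (leq_addr _ _).
  have := series_le_zeta s M.*2 s1; lra.
have : zeta s <= (zeta s - X) / c.
  apply: limr_le; first exact: series_cvg s s1.
  near=> M; apply: hM; near: M; exists n => //.
rewrite ler_pdivlMr //; lra.
Unshelve. all: end_near.
Qed.
End Anal.
Arguments F {R}. Arguments a {R}.

Section Comb.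
Variable R : realType.

Lemma prod_powR I (r : seq I) (P : pred I) (f : I -> nat) (p : R) :
  \prod_(i <- r | P i) ((f i)%:R `^ p) = (\prod_(i <- r | P i) f i)%:R `^ p.
Proof.
apply: (big_rec2 (fun y1 y2 => y1 = y2%:R `^ p)); first by rewrite powR1.
by move=> i y1 y2 _ ->; rewrite natrM powRM.
Qed.

Lemma count_bound (s : R) (Q : pred nat) (b k n : nat) :
  0 <= s -> (0 < b)%N -> (forall d, Q d -> b <= d)%N ->
  (forall t : {ffun 'I_k.+1 -> 'I_n.+1},
     [forall i, 1 < (t i : nat)]%N && (\prod_(i < k.+1) (t i : nat) == n)%N ->
     forall i, Q (t i)) ->
  (H k.+1 n)%:R <= (\sum_(d < n.+1) (if Q d then F s d else 0)) ^+ k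
                    * (n%:R `^ s) / (b%:R `^ s).
Proof.
move=> s0 b0 Qb hA.
set A := [set t : {ffun 'I_k.+1 -> 'I_n.+1} |
      [forall i, 1 < (t i : nat)]%N && (\prod_(i < k.+1) (t i : nat) == n)%N].
have -> : H k.+1 n = #|A| by [].
pose restr (t : {ffun 'I_k.+1 -> 'I_n.+1}) :=
  [ffun i : 'I_k => t (widen_ord (leqnSn k) i)].
set B := [set u : {ffun 'I_k -> 'I_n.+1} |
   [forall i, Q (u i)] && (b * \prod_(i < k) (u i : nat) <= n)%N].
have prodE (t : {ffun 'I_k.+1 -> 'I_n.+1}) :
    (\prod_(i < k.+1) (t i : nat) = (\prod_(i < k) (restr t i : nat)) * t ord_max)%N.
  by rewrite big_ord_recr /=; congr (_ * _)%N; apply: eq_bigr => i _; rewrite ffunE.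
have inj : {in A &, injective restr}.
  move=> t1 t2; rewrite !inE => /andP[/forallP h1 /eqP p1] /andP[/forallP h2 /eqP p2] e.
  have P0 : (0 < \prod_(i < k) (restr t1 i : nat))%N.
    by rewrite prodn_gt0 // => i; rewrite ffunE; apply: leq_trans (h1 _).
  have em : t1 ord_max = t2 ord_max.
    apply: val_inj => /=; apply/eqP; rewrite -(eqn_pmul2l P0).
    by rewrite -prodE p1 e -prodE p2.
  apply/ffunP => i; case: (unliftP ord_max i) => [j ->|->] //.
  have -> : lift ord_max j = widen_ord (leqnSn k) j.
    by apply: val_inj; rewrite /= /bump leqNgt ltn_ord.
  by move/ffunP: e => /(_ j); rewrite !ffunE.
have sub : restr @: A \subset B.
  apply/fintype.subsetP => _ /imsetP[t tA ->].
  have hQ := hA t; move: tA; rewrite !inE => /andP[h1 /eqP p1].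
  rewrite /=; apply/andP; split.
    by apply/forallP => i; rewrite ffunE; apply: hQ; rewrite h1 p1 eqxx.
  apply: (@leq_trans (\prod_(i < k.+1) (t i : nat))); last by rewrite p1.
  rewrite prodE mulnC leq_mul2l Qb ?orbT //.
  by apply: hQ; rewrite h1 p1 eqxx.
have cardAB : (#|A| <= #|B|)%N.
  by rewrite -(card_in_imset inj); exact: subset_leq_card.
apply: le_trans (_ : (#|B|)%:R <= _); first by rewrite ler_nat.
have step1 : forall u, u \in B -> 1 <= n%:R `^ s / b%:R `^ s *
     \prod_(i < k) (if Q (u i) then F s (u i) else 0).
  move=> u; rewrite inE => /andP[/forallP hQ hb].
  have P0 : (0 < \prod_(i < k) (u i : nat))%N.
    by rewrite prodn_gt0 // => i; apply: leq_trans b0 (Qb _ (hQ i)).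
  rewrite (eq_bigr (fun i => (u i : nat)%:R `^ (- s))); last first.
    by move=> i _; rewrite hQ.
  rewrite prod_powR powRN -mulrA -invfM -powRM ?ler0n // -natrM.
  rewrite ler_pdivlMr ?mul1r; last by rewrite powR_gt0 // ltr0n muln_gt0 b0.
  by apply: ge0_ler_powR => //; rewrite ?nnegrE ?ler0n // ler_nat.
have -> : (#|B|)%:R = \sum_(u in B) (1 : R) by rewrite sumr_const.
set G := (fun u : {ffun 'I_k -> 'I_n.+1} => n%:R `^ s / b%:R `^ s *
     \prod_(i < k) (if Q (u i) then F s (u i) else 0)).
have h1 : \sum_(u in B) (1 : R) <= \sum_(u in B) G u.
  by apply: ler_sum => u uB; exact: step1.
have h2 : \sum_(u in B) G u <= \sum_u G u.
  rewrite [X in _ <= X](bigID (mem B)) /= lerDl.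
  apply: sumr_ge0 => u _; apply: mulr_ge0; first by apply: divr_ge0; exact: powR_ge0.
  by apply: prodr_ge0 => i _; case: ifP => // _; exact: F_ge0.
apply: (le_trans h1); apply: (le_trans h2); rewrite le_eqVlt; apply/orP; left; apply/eqP.
rewrite /G -mulr_sumr.
rewrite -(bigA_distr_bigA (fun (i : 'I_k) (d : 'I_n.+1) => if Q d then F s d else 0)).
by rewrite prodr_const card_ord mulrC mulrA.
Qed.
End Comb.

Theorem corollary2p5 (R : realType) (s : R) (n k : nat) :
  1 < s -> (2 <= n)%N -> (1 <= k)%N ->
  ((H k n)%:R <= (zeta s - 1) ^+ k.-1 * (n%:R `^ s) / (2%:R `^ s)) /\
  (odd n ->
   (H k n)%:R <= ((1 - 2%:R `^ (- s)) * zeta s - 1) ^+ k.-1 * (n%:R `^ s)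
                   / (3%:R `^ s)).
Proof.
move=> s1 n2 k1.
have s0 : 0 < s by apply: lt_trans s1.
case: k k1 => [//|k] _ /=.
case: n n2 => [//|N] n2.
have mono : forall (X Y : R) (b : nat), 0 <= X -> X <= Y ->
    X ^+ k * N.+1%:R `^ s / b%:R `^ s <= Y ^+ k * N.+1%:R `^ s / b%:R `^ s.
  move=> X Y b X0 XY.
  rewrite ler_wpM2r ?invr_ge0 ?powR_ge0 // ler_wpM2r ?powR_ge0 //.
  by apply: lerXn2r; rewrite ?nnegrE //; apply: le_trans XY.
split.
  apply: (le_trans (@count_bound R s (fun d => 2 <= d)%N 2 k N.+1 (ltW s0) isT _ _)).
  - by [].
  - by move=> t /andP[/forallP h _] i; exact: h.
  apply: mono.
    by rewrite sumr_ge0 // => i _; case: ifP => // _; rewrite /F powR_ge0.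
  rewrite -(big_mkord xpredT (fun d => if (2 <= d)%N then F s d else 0)).
  have := sum2 R s N s0; rewrite -seriesF // => e.
  have := series_le_zeta R s N.+1 s1; lra.
move=> hn.
apply: (le_trans (@count_bound R s (fun d => (2 <= d)%N && odd d) 3 k N.+1 (ltW s0) isT _ _)).
- by move=> [|[|[|d]]].
- move=> t /andP[/forallP h /eqP p] i; apply/andP; split; first exact: h.
  have : odd (\prod_(j < k.+1) (t j : nat)) by rewrite p.
  rewrite (bigD1 i) //= oddM => /andP[].
  by [].
apply: mono.
  by rewrite sumr_ge0 // => i _; case: ifP => // _; rewrite /F powR_ge0.
rewrite -(big_mkord xpredT (fun d => if (2 <= d)%N && odd d then F s d else 0)).
have := sum2odd R s N s0 => e.
have := odd_zeta R s N.+1 s1; lra.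
Qed.
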